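(* In the setting of the context, for all tuples $(T,L)\in\{1,\ldots,L\}\times\mathbb N_+$ and any $u_{\mathrm{cut}}\in\{1,\ldots,p-1\}$, $$\widehat V'^{\,+}_{T,L}(0.5,\rho_{\mathrm{thr}}(u_{\mathrm{cut}}+1))\le\widehat V'^{\,+}_{T,L}(0.5,\rho_{\mathrm{thr}}(u_{\mathrm{cut}})).$$
   Context: Data: $\boldsymbol X=[\boldsymbol x_1\cdots\boldsymbol x_p]\in\mathbb R^{n\times p}$ with standardized columns, $\boldsymbol y\in\mathbb R^n$. T-Rex framework: fix $K,L\ge1$; for $k=1,\ldots,K$ append a dummy matrix $\mathring{\boldsymbol X}_k\in\mathbb R^{n\times L}$ (i.i.d. entries from a univariate distribution with finite mean and variance), run a forward selection method (at most one variable per iteration) on $(\boldsymbol y,[\boldsymbol X\ \mathring{\boldsymbol X}_k])$ and terminate once $t$ dummies are included, $t\in\{1,\ldots,L\}$; $\mathcal C_{k,L}(t)$ = original variables included before termination; $\Phi_{t,L}(j)=\frac1K\sum_k\mathbb 1\{j\in\mathcal C_{k,L}(t)\}$. Dendrogram groups: with $\rho_{j,j'}=\boldsymbol x_j^\top\boldsymbol x_{j'}$, agglomerative hierarchical clustering with distance $1-|\rho|$ (single, complete, or average linkage) gives merge heights $c_1\ge\cdots\ge c_{p-1}$; set $c_0=1$, $c_p=0$, $\rho_{\mathrm{thr}}(u)=1-c_u$ for $u=1,\ldots,p$; $\mathrm{Gr}(j,\rho_{\mathrm{thr}}(u_{\mathrm{cut}}))$ is the set of $j'\neq j$ in the same cluster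 as $j$ when the dendrogram is cut at distance $1-\rho_{\mathrm{thr}}(u_{\mathrm{cut}})$. For $t\in\{1,\ldots,T\}$ define $\Psi^+_{t,L}(j,\rho)=\big(2-\min_{j'\in\mathrm{Gr}(j,\rho)}|\Phi_{T,L}(j)-\Phi_{T,L}(j')|\big)^{-1}$ if $\mathrm{Gr}(j,\rho)\ne\varnothing$ and $\Psi^+_{t,L}(j,\rho)=1$ otherwise, and $$\widehat V'^{\,+}_{T,L}(0.5,\rho)=\sum_{t=1}^T\frac{p-\sum_{q=1}^p\Psi^+_{t,L}(q,\rho)\cdot\Phi_{t,L}(q)}{L-(t-1)}.$$ *)

(* Defs.v *)
From mathcomp Require Import all_boot all_order all_algebra.
Set Implicit Arguments. Unset Strict Implicit. Unset Printing Implicit Defensive.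
Import Order.TTheory GRing.Theory Num.Theory.
Local Open Scope ring_scope.

Section TRex.
Variable R : realFieldType.

(* minimum / maximum of f over a finite set A (meaningful for A nonempty) *)
Definition setmin (T : finType) (A : {set T}) (f : T -> R) : R :=
  let s := [seq f x | x in A] in \big[Num.min/head 0 s]_(x <- s) x.
Definition setmax (T : finType) (A : {set T}) (f : T -> R) : R :=
  let s := [seq f x | x in A] in \big[Num.max/head 0 s]_(x <- s) x.

Variables (n p : nat).

Definition rho (X : 'M[R]_(n, p)) (j j' : 'I_p) : R := \sum_(i < n) X i j * X i j'.
Definition cdist (X : 'M[R]_(n, p)) (j j' : 'I_p) : R := 1 - `|rho X j j'|.

Definition standardized (X : 'M[R]_(n, p)) : Prop :=
  forall j : 'I_p, \sum_(i < n) X i j = 0 /\ \sum_(i < n) X i j ^+ 2 = 1.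

Inductive linkage := Single | Complete | Average.

Definition link_dist (lk : linkage) (X : 'M[R]_(n, p)) (A B : {set 'I_p}) : R :=
  match lk with
  | Single => setmin (setX A B) (fun ab => cdist X ab.1 ab.2)
  | Complete => setmax (setX A B) (fun ab => cdist X ab.1 ab.2)
  | Average => (\sum_(a in A) \sum_(b in B) cdist X a b) / (#|A| * #|B|)%:R
  end.

(* An agglomerative hierarchical clustering run: P u is the partition with u
   clusters (u = 1..p); P p is the partition into singletons; P u is obtained
   from P u.+1 by merging two distinct clusters of minimal linkage distance,
   and c u is the height of that merge. *)
Definition agglomerative (lk : linkage) (X : 'M[R]_(n, p))
    (P : nat -> {set {set 'I_p}}) (c : nat -> R) : Prop :=
  P p = [set [set j] | j : 'I_p] /\
  forall u : nat, (1 <= u <= p.-1)%N ->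
    exists A B : {set 'I_p},
      [/\ A \in P u.+1, B \in P u.+1, A != B &
          [/\ (forall A' B', A' \in P u.+1 -> B' \in P u.+1 -> A' != B' ->
              link_dist lk X A B <= link_dist lk X A' B'),
          P u = (P u.+1 :\ A :\ B) :|: [set A :|: B] &
          c u = link_dist lk X A B]].

(* Gr(j, rho_thr(u)): the other members of j's cluster when the dendrogram is
   cut at distance 1 - rho_thr(u) = c_u, i.e. into the u clusters of P u. *)
Definition Gr (P : nat -> {set {set 'I_p}}) (u : nat) (j : 'I_p) : {set 'I_p} :=
  [set j' in pblock (P u) j | j' != j].

Definition Phi (K : nat) (C : nat -> 'I_K -> {set 'I_p}) (t : nat) (j : 'I_p) : R :=
  K%:R^-1 * \sum_(k < K) (j \in C t k)%:R.

(* Psi^+_{t,L}(j, rho_thr(u)) (uses Phi_{T,L}, independent of t) *)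
Definition Psi (K : nat) (C : nat -> 'I_K -> {set 'I_p}) (T : nat)
    (P : nat -> {set {set 'I_p}}) (u : nat) (j : 'I_p) : R :=
  if Gr P u j == set0 then 1
  else (2 - setmin (Gr P u j) (fun j' => `|Phi C T j - Phi C T j'|))^-1.

Definition Vhat (K : nat) (C : nat -> 'I_K -> {set 'I_p}) (T L : nat)
    (P : nat -> {set {set 'I_p}}) (u : nat) : R :=
  \sum_(1 <= t < T.+1)
     (p%:R - \sum_(q < p) Psi C T P u q * Phi C t q) / (L - t.-1)%:R.

End TRex.

(* Main.v *)
Require Import Defs.
From mathcomp Require Import all_boot all_order all_algebra.
From mathcomp Require Import zify lra.
Import Order.TTheory GRing.Theory Num.Theory.
Local Open Scope ring_scope.

Section Helpers.
Variable R : realFieldType.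

Lemma big_min_le (s : seq R) (idx x : R) : x \in s ->
  \big[Num.min/idx]_(y <- s) y <= x.
Proof.
elim: s => //= a s IH; rewrite inE big_cons => /orP [/eqP->|xs].
  by rewrite ge_min lexx.
by rewrite ge_min (IH xs) orbT.
Qed.

Lemma big_min_mem (s : seq R) (idx : R) :
  \big[Num.min/idx]_(y <- s) y \in idx :: s.
Proof.
elim: s => [|a s IH]; first by rewrite big_nil inE eqxx.
rewrite big_cons /Num.min /Order.min; case: ifP => _.
  by rewrite !inE eqxx orbT.
move: IH; rewrite !inE => /orP [->|->]; by rewrite ?orbT.
Qed.

Lemma setmin_le (T : finType) (A : {set T}) (f : T -> R) x :
  x \in A -> setmin A f <= f x.
Proof. by move=> xA; rewrite /setmin; apply: big_min_le; apply: image_f. Qed.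

Lemma setmin_mem (T : finType) (A : {set T}) (f : T -> R) :
  A != set0 -> exists2 x, x \in A & setmin A f = f x.
Proof.
case/set0Pn => x0 x0A; rewrite /setmin.
set s := [seq f x | x in A].
have hs : f x0 \in s by apply: image_f.
have : \big[Num.min/head 0 s]_(y <- s) y \in s.
  move: (big_min_mem s (head 0 s)); rewrite inE => /orP [/eqP ->|//].
  by case: s hs => //= a s' _; rewrite inE eqxx.
by case/imageP => x xA ->; exists x.
Qed.

Lemma setmin_sub (T : finType) (A B : {set T}) (f : T -> R) :
  A != set0 -> A \subset B -> setmin B f <= setmin A f.
Proof.
move=> An0 AB; have [x xA ->] := setmin_mem _ _ f An0.
by apply: setmin_le; apply: (subsetP AB).
Qed.

End Helpers.

Section Part.
Variable T : finType.

Definition merge (Q : {set {set T}}) (A B : {set T}) :=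
  (Q :\ A :\ B) :|: [set A :|: B].

Lemma triv_merge Q A B : trivIset Q -> A \in Q -> B \in Q ->
  trivIset (merge Q A B).
Proof.
move=> /trivIsetP tQ AQ BQ; apply/trivIsetP => X Y.
rewrite /merge !inE => /orP [/andP [XB /andP [XA XQ]]|/eqP->]
  /orP [/andP [YB /andP [YA YQ]]|/eqP->] XY.
- exact: tQ.
- rewrite -setI_eq0 setIUr.
  have := tQ X A XQ AQ XA; rewrite -setI_eq0 => /eqP ->.
  have := tQ X B XQ BQ XB; rewrite -setI_eq0 => /eqP ->.
  by rewrite setU0.
- rewrite -setI_eq0 setIUl.
  have := tQ A Y AQ YQ; rewrite eq_sym => /(_ YA); rewrite -setI_eq0 => /eqP ->.
  have := tQ B Y BQ YQ; rewrite eq_sym => /(_ YB); rewrite -setI_eq0 => /eqP ->.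
  by rewrite setU0.
- by rewrite eqxx in XY.
Qed.

Lemma pblock_merge Q A B j : trivIset Q -> A \in Q -> B \in Q ->
  pblock Q j \subset pblock (merge Q A B) j.
Proof.
move=> tQ AQ BQ; have tQ' := triv_merge _ _ _ tQ AQ BQ.
case: (boolP (j \in cover Q)) => jc; last first.
  rewrite /pblock; case: pickP => [D /andP [DQ jD]|_]; last exact: sub0set.
  by exfalso; move/negP: jc; apply; apply/bigcupP; exists D.
have DQ := pblock_mem jc; have jD : j \in pblock Q j by rewrite mem_pblock.
set D := pblock Q j in DQ jD *.
case: (boolP ((D == A) || (D == B))) => hD.
  have UQ : A :|: B \in merge Q A B by rewrite /merge !inE eqxx orbT.
  have jU : j \in A :|: B by case/orP: hD => /eqP <-; rewrite inE jD ?orbT.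
  rewrite (def_pblock tQ' UQ jU).
  by case/orP: hD => /eqP ->; [apply: subsetUl|apply: subsetUr].
have DQ' : D \in merge Q A B.
  by rewrite /merge !inE DQ; move: hD; rewrite negb_or => /andP [-> ->].
by rewrite (def_pblock tQ' DQ' jD).
Qed.

End Part.
Arguments merge {T}.

Theorem lemma3 (R : realFieldType) (n p K L T : nat)
    (X : 'M[R]_(n, p)) (hX : standardized X)
    (lk : linkage) (P : nat -> {set {set 'I_p}}) (c : nat -> R)
    (hP : agglomerative lk X P c)
    (C : nat -> 'I_K -> {set 'I_p})
    (hK : (0 < K)%N) (hL : (0 < L)%N) (hT : (1 <= T <= L)%N)
    (u : nat) (hu : (1 <= u <= p.-1)%N) :
  Vhat R C T L P u.+1 <= Vhat R C T L P u.
Proof.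
case: hP => [Pp hstep].
have step v : (1 <= v <= p.-1)%N -> exists A B,
    [/\ A \in P v.+1, B \in P v.+1 & P v = merge (P v.+1) A B].
  move=> hv; have [A [B [AQ BQ _ [_ e _]]]] := hstep v hv.
  by exists A, B; split.
have triv : forall d, (d < p)%N -> trivIset (P (p - d)%N).
  elim=> [_|d IH hd]; first rewrite subn0 Pp.
    apply/trivIsetP => X1 Y1 /imsetP [a _ ->] /imsetP [b _ ->] ab.
    rewrite disjoint_sym disjoints1 inE; apply: contra ab => /eqP ->.
    by rewrite eqxx.
  have hv : (1 <= p - d.+1 <= p.-1)%N by apply/andP; split; lia.
  have [A [B [AQ BQ ->]]] := step _ hv.
  have e : ((p - d.+1).+1 = p - d)%N by lia.
  rewrite e in AQ BQ *; apply: triv_merge => //; apply: IH; lia.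
have tU : trivIset (P u.+1).
  have -> : (u.+1 = p - (p - u.+1))%N by lia.
  apply: triv; lia.
have [A [B [AQ BQ Pu]]] := step _ hu.
have Grsub j : Gr P u.+1 j \subset Gr P u j.
  apply/subsetP => x; rewrite /Gr !inE => /andP [xb ->]; rewrite andbT.
  rewrite Pu; exact: (subsetP (pblock_merge _ _ _ _ j tU AQ BQ)).
have Phi01 t j : 0 <= Phi R C t j <= 1.
  rewrite /Phi; apply/andP; split.
    by apply: mulr_ge0; [rewrite invr_ge0 ler0n|apply: sumr_ge0 => k _; rewrite ler0n].
  have Kp : 0 < K%:R :> R by rewrite ltr0n.
  rewrite mulrC ler_pdivrMr // mul1r.
  apply: le_trans (_ : \sum_(k < K) (1:R) <= _).
    by apply: ler_sum => k _; case: (j \in C t k).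
  by rewrite sumr_const card_ord.
have diff01 j j' : `|Phi R C T j - Phi R C T j'| <= 1.
  have /andP [a1 a2] := Phi01 T j; have /andP [b1 b2] := Phi01 T j'.
  rewrite ler_norml; apply/andP; split; lra.
have Psimono q : Psi R C T P u q <= Psi R C T P u.+1 q.
  rewrite /Psi.
  have sub := Grsub q.
  set f := (fun j' => `|Phi R C T q - Phi R C T j'|).
  case: (boolP (Gr P u q == set0)) => [/eqP e0|ne0].
    have -> : Gr P u.+1 q == set0 by rewrite -subset0 -e0.
    by [].
  have m1 : setmin (Gr P u q) f <= 1.
    have [x _ ->] := setmin_mem _ _ _ f ne0; exact: diff01.
  case: (boolP (Gr P u.+1 q == set0)) => [e1|ne1].
    rewrite invf_le1; lra.
  have m2 : setmin (Gr P u.+1 q) f <= 1.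
    have [x _ ->] := setmin_mem _ _ _ f ne1; exact: diff01.
  have m12 : setmin (Gr P u q) f <= setmin (Gr P u.+1 q) f by apply: setmin_sub.
  rewrite lef_pV2 ?posrE; lra.
rewrite /Vhat; apply: ler_sum => t _.
apply: ler_wpM2r; first by rewrite invr_ge0 ler0n.
apply: lerB => //; apply: ler_sum => q _.
apply: ler_wpM2r; last exact: Psimono.
by case/andP: (Phi01 t q).
Qed.
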